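(* For every integer $k\ge 2$, $$F_v(J_{2k+1},J_{2k+1};2k+1)\le 2F_v(k,k;k+1)+2F_v(J_{k+1},J_{k+1};k+1)+F_v(K_k,J_{k+1};k+1).$$
   Context: All graphs are finite and simple. $J_n$ denotes $K_n$ with one edge removed. An integer $a$ used in place of a graph denotes $K_a$. ''A graph $F$ contains $H$'' means $F$ has a (not necessarily induced) subgraph isomorphic to $H$. $G\rightarrow(H_1,\dots,H_r)^v$ means: for every partition $V(G)=X_1\cup\dots\cup X_r$ there is $i$ such that the subgraph induced by $X_i$ contains $H_i$. $\mathcal{F}_v(H_1,\dots,H_r;k)$ is the set of $K_k$-free graphs $G$ with $G\rightarrow(H_1,\dots,H_r)^v$, and $F_v(H_1,\dots,H_r;k)$ is the minimum number of vertices of a graph in this set. *)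

(* Defs.v *)
From mathcomp Require Import all_boot finset.
Set Implicit Arguments. Unset Strict Implicit. Unset Printing Implicit Defensive.

Definition simple_graph (T : finType) (e : rel T) : Prop :=
  (forall x y, e x y = e y x) /\ (forall x, ~~ e x x).

Definition Kg (a : nat) : rel 'I_a := fun i j => i != j.

Arguments Kg a : clear implicits.

(* J_n : K_n with the edge {0,1} removed *)
Definition Jg (n : nat) : rel 'I_n := fun i j =>
  (i != j) && ~~ (((val i == 0) && (val j == 1)) || ((val i == 1) && (val j == 0))).

Arguments Jg n : clear implicits.

Definition contains_in (T U : finType) (eG : rel T) (X : {set T}) (eH : rel U) : Prop :=
  exists f : U -> T,
    [/\ injective f, (forall u, f u \in X) & (forall u v, eH u v -> eG (f u) (f v))].

Definition clique_free (T : finType) (eG : rel T) (k : nat) : Prop :=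
  ~ contains_in eG [set: T] (Kg k).

(* G -> (H1,H2)^v : every partition V = X1 ∪ X2 has G[X1] ⊇ H1 or G[X2] ⊇ H2 *)
Definition varrows2 (T U1 U2 : finType) (eG : rel T) (e1 : rel U1) (e2 : rel U2) : Prop :=
  forall X : {set T}, contains_in eG X e1 \/ contains_in eG (~: X) e2.

Definition in_Fv (T U1 U2 : finType) (eG : rel T) (e1 : rel U1) (e2 : rel U2) (k : nat) : Prop :=
  [/\ simple_graph eG, clique_free eG k & varrows2 eG e1 e2].

(* F_v(H1,H2;k) <= n : some graph in F_v(H1,H2;k) has at most n vertices
   (graphs are taken on vertex sets 'I_m, w.l.o.g. up to isomorphism) *)
Definition Fv_le (U1 U2 : finType) (e1 : rel U1) (e2 : rel U2) (k n : nat) : Prop :=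
  exists m, m <= n /\ exists eG : rel 'I_m, in_Fv eG e1 e2 k.

Definition is_Fv (U1 U2 : finType) (e1 : rel U1) (e2 : rel U2) (k n : nat) : Prop :=
  Fv_le e1 e2 k n /\ forall m, Fv_le e1 e2 k m -> n <= m.

(* Main.v *)
Require Import Defs.
From mathcomp Require Import all_boot finset zify.
Set Implicit Arguments. Unset Strict Implicit. Unset Printing Implicit Defensive.

Lemma transfer (T U1 U2 : finType) (eG : rel T) (e1 : rel U1) (e2 : rel U2) k :
  in_Fv eG e1 e2 k -> exists eG' : rel 'I_#|T|, in_Fv eG' e1 e2 k.
Proof.
case=> [[hs hi] hc ha].
exists (fun i j => eG (enum_val i) (enum_val j)); split.
- by split=> [x y|x]; [apply: hs|apply: hi].
- move=> [f [finj _ fE]]; apply: hc; exists (fun u => enum_val (f u)); split=> //.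
  by move=> u v /(can_inj enum_valK) /finj.
- move=> X'; case: (ha [set x | enum_rank x \in X']) => [[f [finj fX fE]]|[f [finj fX fE]]].
  + left; exists (fun u => enum_rank (f u)); split.
    * by move=> u v /(can_inj enum_rankK) /finj.
    * by move=> u; have := fX u; rewrite inE.
    * by move=> u v /fE; rewrite !enum_rankK.
  + right; exists (fun u => enum_rank (f u)); split.
    * by move=> u v /(can_inj enum_rankK) /finj.
    * by move=> u; have := fX u; rewrite !inE.
    * by move=> u v /fE; rewrite !enum_rankK.
Qed.

Section Blow.
Variables (T1 T2 T3 T4 T5 : finType).
Variables (e1 : rel T1) (e2 : rel T2) (e3 : rel T3) (e4 : rel T4) (e5 : rel T5).

Definition V := ((((T1 + T2) + T3) + T4) + T5)%type.
Definition pc (x : V) : nat := match x with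
 | inl (inl (inl (inl _))) => 0 | inl (inl (inl (inr _))) => 1
 | inl (inl (inr _)) => 2 | inl (inr _) => 3 | inr _ => 4 end.
Definition adj (p q : nat) := (p.+1 %% 5 == q) || (q.+1 %% 5 == p).
Definition eV (x y : V) : bool := match x, y with
 | inl (inl (inl (inl u))), inl (inl (inl (inl v))) => e1 u v
 | inl (inl (inl (inr u))), inl (inl (inl (inr v))) => e2 u v
 | inl (inl (inr u)), inl (inl (inr v)) => e3 u v
 | inl (inr u), inl (inr v) => e4 u v
 | inr u, inr v => e5 u v
 | _, _ => adj (pc x) (pc y)
 end.

Definition i1 (u : T1) : V := inl (inl (inl (inl u))).
Definition i2 (u : T2) : V := inl (inl (inl (inr u))).
Definition i3 (u : T3) : V := inl (inl (inr u)).
Definition i4 (u : T4) : V := inl (inr u).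
Definition i5 (u : T5) : V := inr u.

Lemma eV_cross x y : pc x != pc y -> eV x y = adj (pc x) (pc y).
Proof. by case: x => [[[[x|x]|x]|x]|x]; case: y => [[[[y|y]|y]|y]|y]. Qed.

Lemma pc_lt5 x : pc x < 5.
Proof. by case: x => [[[[x|x]|x]|x]|x]. Qed.

Lemma adj_sym p q : adj p q = adj q p.
Proof. by rewrite /adj orbC. Qed.

Lemma adj_irr p : p < 5 -> adj p p = false.
Proof. by case: p => [|[|[|[|[|]]]]]. Qed.

Lemma no_tri p q r : p < 5 -> q < 5 -> r < 5 -> adj p q -> adj q r -> adj p r -> False.
Proof.
by case: p => [|[|[|[|[|]]]]] //; case: q => [|[|[|[|[|]]]]] //; case: r => [|[|[|[|[|]]]]].
Qed.

Lemma V_simple : simple_graph e1 -> simple_graph e2 -> simple_graph e3 ->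
  simple_graph e4 -> simple_graph e5 -> simple_graph eV.
Proof.
move=> [s1 r1] [s2 r2] [s3 r3] [s4 r4] [s5 r5]; split.
- by case=> [[[[x|x]|x]|x]|x]; case=> [[[[y|y]|y]|y]|y] //=.
- by case=> [[[[x|x]|x]|x]|x] /=.
Qed.

Definition located (p : nat) (Y : {set V}) (U : finType) (eH : rel U) :=
  exists f : U -> V, [/\ injective f, forall u, f u \in Y,
     forall u v, eH u v -> eV (f u) (f v) & forall u, pc (f u) = p].

Lemma lift_loc (T : finType) (eT : rel T) (inj : T -> V) p (Y : {set V}) (S : {set T})
   (U : finType) (eH : rel U) :
  injective inj -> (forall u v, eV (inj u) (inj v) = eT u v) -> (forall u, pc (inj u) = p) ->
  (forall u, u \in S -> inj u \in Y) -> contains_in eT S eH -> located p Y eH.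
Proof.
move=> ii hE hp hS [f [fi fS fE]]; exists (fun u => inj (f u)); split.
- by move=> u v /ii /fi.
- by move=> u; apply: hS.
- by move=> u v /fE; rewrite hE.
- by [].
Qed.

Lemma clique_range (T : finType) (eT : rel T) (inj : T -> V) m (g : 'I_m -> V) :
  injective inj -> (forall u v, eV (inj u) (inj v) = eT u v) ->
  injective g -> (forall i j, i != j -> eV (g i) (g j)) -> (forall i, g i \in codom inj) ->
  contains_in eT [set: T] (Kg m).
Proof.
move=> ii hE gi gE hr; exists (fun i => iinv (hr i)); split.
- by move=> i j h; apply: gi; rewrite -(f_iinv (hr i)) -(f_iinv (hr j)) h.
- by move=> i; rewrite inE.
- by move=> i j hij; rewrite -hE !f_iinv; apply: gE.
Qed.


Section CF.
Variable n : nat.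
Hypotheses (c1 : clique_free e1 n.+1) (c2 : clique_free e2 n.+1) (c3 : clique_free e3 n.+1)
  (c4 : clique_free e4 n.+1) (c5 : clique_free e5 n.+1).

Lemma piece_K (g : 'I_n.+1 -> V) p : injective g -> (forall i, pc (g i) = p) ->
  (forall i j, i != j -> eV (g i) (g j)) -> False.
Proof.
move=> gi hg gE.
have hp : p < 5 by rewrite -(hg ord0) pc_lt5.
case: p hp hg => [|[|[|[|[|]]]]] // _ hg.
- apply: c1; apply: (@clique_range _ _ i1 _ g) => //; first by move=> u v [].
  move=> i; by move: (hg i); case: (g i) => [[[[x|x]|x]|x]|x] //= _; apply: (codom_f i1).
- apply: c2; apply: (@clique_range _ _ i2 _ g) => //; first by move=> u v [].
  move=> i; by move: (hg i); case: (g i) => [[[[x|x]|x]|x]|x] //= _; apply: (codom_f i2).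
- apply: c3; apply: (@clique_range _ _ i3 _ g) => //; first by move=> u v [].
  move=> i; by move: (hg i); case: (g i) => [[[[x|x]|x]|x]|x] //= _; apply: (codom_f i3).
- apply: c4; apply: (@clique_range _ _ i4 _ g) => //; first by move=> u v [].
  move=> i; by move: (hg i); case: (g i) => [[[[x|x]|x]|x]|x] //= _; apply: (codom_f i4).
- apply: c5; apply: (@clique_range _ _ i5 _ g) => //; first by move=> u v [].
  move=> i; by move: (hg i); case: (g i) => [[[[x|x]|x]|x]|x] //= _; apply: (codom_f i5).
Qed.

Lemma extract m (f : 'I_m -> V) (S : {set 'I_m}) p : injective f ->
  (forall i j, i != j -> eV (f i) (f j)) -> (forall i, i \in S -> pc (f i) = p) ->
  n.+1 <= #|S| -> False.
Proof.
move=> fi fE hS hc.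
apply: (@piece_K (fun j => f (enum_val (widen_ord hc j))) p).
- by move=> i j /fi /enum_val_inj /(congr1 val) /= /val_inj.
- by move=> i; apply: hS; apply: enum_valP.
- move=> i j hij; apply: fE; apply/negP => /eqP /enum_val_inj /(congr1 val) /= /val_inj /eqP.
  by apply/negP.
Qed.

Lemma V_clique_free : clique_free eV (2 * n).+1.
Proof.
move=> [f [fi _ fE]].
have fE' : forall i j, i != j -> eV (f i) (f j) by move=> i j h; apply: fE.
set p := pc (f ord0).
case: (pickP [pred j | pc (f j) != p]) => [j /= hj | hall].
- set q := pc (f j).
  have h0j : (ord0 : 'I_(2 * n).+1) != j by apply/eqP=> e; move: hj; rewrite -e eqxx.
  have apq : adj p q by rewrite -eV_cross ?(eq_sym p) //; exact: fE'.
  have hpq : forall i, (pc (f i) == p) || (pc (f i) == q).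
    move=> i; case: (boolP (pc (f i) == p)) => // hip; case: (boolP (pc (f i) == q)) => // hiq; exfalso.
    have hi0 : i != ord0 by apply/eqP=> e; move: hip; rewrite e eqxx.
    have hij : i != j by apply/eqP=> e; move: hiq; rewrite e eqxx.
    have a1 : adj (pc (f i)) p by rewrite -eV_cross //; exact: fE'.
    have a2 : adj q (pc (f i)).
      by rewrite -eV_cross ?(eq_sym q) //; apply: fE'; rewrite eq_sym.
    by apply: (no_tri (pc_lt5 _) (pc_lt5 _) (pc_lt5 _) apq a2); rewrite adj_sym.
  have hU : [set i | pc (f i) == p] :|: [set i | pc (f i) == q] = [set: 'I_(2 * n).+1].
    by apply/setP=> i; rewrite !inE hpq.
  have := cardsUI [set i | pc (f i) == p] [set i | pc (f i) == q].
  rewrite hU cardsT card_ord => hc.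
  have hcase : (n.+1 <= #|[set i | pc (f i) == p]|) || (n.+1 <= #|[set i | pc (f i) == q]|).
    move: hc; set x := #|_ :&: _|; set a := #|[set i | _ == p]|; set b := #|[set i | _ == q]|.
    move=> hc; case: (leqP n.+1 a) => ha //=; lia.
  case/orP: hcase => [hp|hq].
  + by apply: (@extract _ f _ p fi fE' _ hp) => i; rewrite inE => /eqP.
  + by apply: (@extract _ f _ q fi fE' _ hq) => i; rewrite inE => /eqP.
- apply: (@extract _ f [set: _] p fi fE').
  + by move=> i _; move: (hall i) => /= /negbFE /eqP.
  + by rewrite cardsT card_ord; rewrite mul2n -addnn ltnS leq_addl.
Qed.
End CF.


Lemma pc_neq_adj p q x y : pc x = p -> pc y = q -> adj p q -> (p != q).
Proof.
move=> hx _ a; apply/eqP=> e; subst q.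
by rewrite adj_irr // -hx pc_lt5 in a.
Qed.

Lemma combine (Y : {set V}) k p q : located p Y (Kg k.+1) -> located q Y (Jg k.+2) ->
  adj p q -> contains_in eV Y (Jg (2 * k.+1).+1).
Proof.
move=> [fK [Ki KY KE Kp]] [fJ [Ji JY JE Jp]] a.
have pq : p != q by apply: (pc_neq_adj (Kp ord0) (Jp ord0) a).
have cr : forall i j, eV (fK i) (fJ j) by move=> i j; rewrite eV_cross Kp Jp //.
have cr' : forall i j, eV (fJ j) (fK i).
  by move=> i j; rewrite eV_cross Kp Jp // 1?adj_sym // eq_sym.
pose f (i : 'I_(2 * k.+1).+1) : V :=
  if i < k.+2 then fJ (inord i) else fK (inord (i - k.+2)).
exists f; split.
- move=> i j; rewrite /f; case: ifP => hi; case: ifP => hj.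
  + move/Ji/(congr1 val); rewrite /= !inordK // => e; exact: val_inj.
  + by move=> e; have := Jp (inord i); rewrite e Kp => epq; move: pq; rewrite epq eqxx.
  + by move=> e; have := Kp (inord (i - k.+2)); rewrite e Jp => epq; move: pq; rewrite epq eqxx.
  + move/Ki/(congr1 val); rewrite /= !inordK; last 2 first.
      * have := ltn_ord j; move: hj => /negbT; lia.
      * have := ltn_ord i; move: hi => /negbT; lia.
    move=> e; apply: val_inj => /=; move: hi hj => /negbT hi /negbT hj; lia.
- by move=> i; rewrite /f; case: ifP.
- move=> i j; rewrite /f /Jg; case: ifP => hi; case: ifP => hj // h.
  + apply: JE; rewrite /Jg -(inj_eq val_inj) /= !inordK //.
  + apply: KE; rewrite /Kg -(inj_eq val_inj) /= !inordK; last 2 first.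
      * have := ltn_ord j; move: hj => /negbT; lia.
      * have := ltn_ord i; move: hi => /negbT; lia.
    move: h => /andP [h _]; move: h; rewrite -(inj_eq val_inj) /=.
    move: hi hj => /negbT hi /negbT hj; lia.
Qed.

Lemma JtoK (Y : {set V}) k q : located q Y (Jg k.+2) -> located q Y (Kg k.+1).
Proof.
move=> [fJ [Ji JY JE Jp]]; exists (fun i => fJ (@lift k.+2 ord0 i)); split => //.
- by move=> i j /Ji /lift_inj.
- have l : forall x : 'I_k.+1, val (@lift k.+2 ord0 x) = x.+1 by move=> x; rewrite /= /bump leq0n add1n.
  move=> i j h; apply: JE; rewrite /Jg (inj_eq (@lift_inj _ ord0)) !l /= andbF andbT.
  by [].
Qed.


Section Pieces.
Variables (X : {set V}) (U1 U2 : finType) (h1 : rel U1) (h2 : rel U2).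
Lemma piece1 : varrows2 e1 h1 h2 -> located 0 X h1 \/ located 0 (~: X) h2.
Proof.
move=> ha; case: (ha [set u | i1 u \in X]) => h; [left|right];
  apply: (@lift_loc _ _ i1 _ _ _ _ _ _ _ _ _ h) => // [u v []//|u]; by rewrite !inE.
Qed.
Lemma piece2 : varrows2 e2 h1 h2 -> located 1 X h1 \/ located 1 (~: X) h2.
Proof.
move=> ha; case: (ha [set u | i2 u \in X]) => h; [left|right];
  apply: (@lift_loc _ _ i2 _ _ _ _ _ _ _ _ _ h) => // [u v []//|u]; by rewrite !inE.
Qed.
Lemma piece3 : varrows2 e3 h1 h2 -> located 2 X h1 \/ located 2 (~: X) h2.
Proof.
move=> ha; case: (ha [set u | i3 u \in X]) => h; [left|right];
  apply: (@lift_loc _ _ i3 _ _ _ _ _ _ _ _ _ h) => // [u v []//|u]; by rewrite !inE.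
Qed.
Lemma piece4 : varrows2 e4 h1 h2 -> located 3 X h1 \/ located 3 (~: X) h2.
Proof.
move=> ha; case: (ha [set u | i4 u \in X]) => h; [left|right];
  apply: (@lift_loc _ _ i4 _ _ _ _ _ _ _ _ _ h) => // [u v []//|u]; by rewrite !inE.
Qed.
Lemma piece5 : varrows2 e5 h1 h2 -> located 4 X h1 \/ located 4 (~: X) h2.
Proof.
move=> ha; case: (ha [set u | i5 u \in X]) => h; [left|right];
  apply: (@lift_loc _ _ i5 _ _ _ _ _ _ _ _ _ h) => // [u v []//|u]; by rewrite !inE.
Qed.
End Pieces.

Lemma varrows2_swap (T U1 U2 : finType) (e : rel T) (h1 : rel U1) (h2 : rel U2) :
  varrows2 e h1 h2 -> varrows2 e h2 h1.
Proof. by move=> ha X; case: (ha (~: X)); rewrite ?setCK; [right|left]. Qed.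

Lemma V_arrow k :
  varrows2 e1 (Kg k.+1) (Kg k.+1) -> varrows2 e2 (Jg k.+2) (Jg k.+2) ->
  varrows2 e3 (Kg k.+1) (Kg k.+1) -> varrows2 e4 (Jg k.+2) (Jg k.+2) ->
  varrows2 e5 (Kg k.+1) (Jg k.+2) ->
  varrows2 eV (Jg (2 * k.+1).+1) (Jg (2 * k.+1).+1).
Proof.
move=> a1 a2 a3 a4 a5 X.
have a5' := varrows2_swap a5.
case: (piece1 X a1) => A1; case: (piece2 X a2) => B1; case: (piece3 X a3) => A2;
case: (piece4 X a4) => B2; case: (piece5 X a5) => C1; case: (piece5 X a5') => C2;
try (have B1K := JtoK B1); try (have B2K := JtoK B2);
try (have C1K := JtoK C1); try (have C2K := JtoK C2);
first [ left; apply: (combine A1 B1) => //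
      | right; apply: (combine A1 B1) => //
      | left; apply: (combine A2 B1) => //
      | right; apply: (combine A2 B1) => //
      | left; apply: (combine A2 B2) => //
      | right; apply: (combine A2 B2) => //
      | left; apply: (combine B2K C1) => //
      | right; apply: (combine B2K C1) => //
      | left; apply: (combine B2K C2) => //
      | right; apply: (combine B2K C2) => //
      | left; apply: (combine C1K B2) => //
      | right; apply: (combine C1K B2) => //
      | left; apply: (combine C2K B2) => //
      | right; apply: (combine C2K B2) => //
      | left; apply: (combine C1 B2) => //
      | right; apply: (combine C1 B2) => //
      | left; apply: (combine C2 B2) => //
      | right; apply: (combine C2 B2) => //
      | left; apply: (combine A1 C1) => //
      | right; apply: (combine A1 C1) => //
      | left; apply: (combine A1 C2) => //
      | right; apply: (combine A1 C2) => // ].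
Qed.

End Blow.

Theorem mainTheorem4 (k : nat) (hk : 2 <= k) (a b c : nat) :
  is_Fv (Kg k) (Kg k) k.+1 a ->
  is_Fv (Jg k.+1) (Jg k.+1) k.+1 b ->
  is_Fv (Kg k) (Jg k.+1) k.+1 c ->
  Fv_le (Jg (2 * k).+1) (Jg (2 * k).+1) (2 * k).+1 (2 * a + 2 * b + c).
Proof.
case: k hk => [|k] // hk.
move=> [[ma [hma [eA [sA cA aA]]]] _] [[mb [hmb [eB [sB cB aB]]]] _]
       [[mc [hmc [eC [sC cC aC]]]] _].
have hG : in_Fv (eV eA eB eA eB eC) (Jg (2 * k.+1).+1) (Jg (2 * k.+1).+1) (2 * k.+1).+1.
  split; [exact: V_simple | exact: V_clique_free | exact: V_arrow].
have [eG' hG'] := transfer hG.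
eexists; split; last by exists eG'.
rewrite !card_sum !card_ord; lia.
Qed.
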